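(* Let $\mu_0$ be a probability measure on $\mathbb R^3$ with $\int|v|^4\mu_0(dv)<\infty$ and $|\hat\mu_0(\xi)|=o(|\xi|^{-p})$ as $|\xi|\to\infty$ for some $p>0$. Assume moreover $\int v\,\mu_0(dv)=0$, $\int|v|^2\mu_0(dv)=3$, $\int v_i^2\mu_0(dv)=\sigma_i^2$ ($i=1,2,3$), $\int v_iv_j\mu_0(dv)=0$ for $i\ne j$ (so $\sigma_1^2+\sigma_2^2+\sigma_3^2=3$). Then there exists a constant $\lambda>0$ such that $$|\hat\mu_0(\xi)|\le\Big(\frac{\lambda^2}{\lambda^2+|\xi|^2}\Big)^q\qquad\text{for every }\xi\in\mathbb R^3,$$ where $q=1/(2\lceil 2/p\rceil)$.
   Context: $\hat\mu_0(\xi)=\int e^{i\xi\cdot v}\mu_0(dv)$; $\lceil x\rceil$ is the least integer not less than $x$. *)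

(* Defs.v *)
From HB Require Import structures.
From mathcomp Require Import all_boot all_order all_algebra.
From mathcomp Require Import all_classical all_reals all_analysis.
Set Implicit Arguments. Unset Strict Implicit. Unset Printing Implicit Defensive.
Import Order.TTheory GRing.Theory Num.Theory.
Import numFieldNormedType.Exports.
Local Open Scope ring_scope.

(* Points of R^3 are represented as ((v1, v2), v3) : R * R * R, equipped with
   the product (Borel) sigma-algebra. *)
Definition vx {R : realType} (v : R * R * R) : R := v.1.1.
Definition vy {R : realType} (v : R * R * R) : R := v.1.2.
Definition vz {R : realType} (v : R * R * R) : R := v.2.

Definition comp3 {R : realType} (i : 'I_3) (v : R * R * R) : R :=
  if val i == 0%N then vx v else if val i == 1%N then vy v else vz v.

Definition dot3 {R : realType} (x v : R * R * R) : R :=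
  vx x * vx v + vy x * vy v + vz x * vz v.

Definition sqnorm3 {R : realType} (v : R * R * R) : R := dot3 v v.
Definition norm3 {R : realType} (v : R * R * R) : R := Num.sqrt (sqnorm3 v).

Definition fourier_re {R : realType} (mu : probability (R * R * R)%type R)
  (xi : R * R * R) : R := Rintegral mu setT (fun v => cos (dot3 xi v)).
Definition fourier_im {R : realType} (mu : probability (R * R * R)%type R)
  (xi : R * R * R) : R := Rintegral mu setT (fun v => sin (dot3 xi v)).
Definition fourier_abs {R : realType} (mu : probability (R * R * R)%type R)
  (xi : R * R * R) : R :=
  Num.sqrt (fourier_re mu xi ^+ 2 + fourier_im mu xi ^+ 2).

(* Main.v *)
Require Import Defs.
From HB Require Import structures.
From mathcomp Require Import all_boot all_order all_algebra.
From mathcomp Require Import all_classical all_reals all_analysis.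
From mathcomp Require Import measurable_realfun ring lra.
Import Order.TTheory GRing.Theory Num.Theory.
Import numFieldNormedType.Exports.
Local Open Scope ring_scope.

Section S.
Variable R : realType.
Variable mu : probability (R * R * R)%type R.

Lemma meas_dot3 (xi : R * R * R) : measurable_fun setT (fun v : R * R * R => dot3 xi v).
Proof.
rewrite /dot3 /vx /vy /vz.
have m11 : measurable_fun setT (fun v : R * R * R => v.1.1).
  exact: (measurableT_comp measurable_fst measurable_fst).
have m12 : measurable_fun setT (fun v : R * R * R => v.1.2).
  exact: (measurableT_comp measurable_snd measurable_fst).
have m2 : measurable_fun setT (fun v : R * R * R => v.2) by exact: measurable_snd.
apply: measurable_funD; first apply: measurable_funD.
- by apply: measurable_funM => //; exact: measurable_cst.
- by apply: measurable_funM => //; exact: measurable_cst.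
- by apply: measurable_funM => //; exact: measurable_cst.
Qed.

Definition g3 (xi : R * R * R) (k0 k1 k2 : R) (v : R * R * R) : R :=
  k0 + k1 * cos (dot3 xi v) + k2 * sin (dot3 xi v).

Lemma meas_g3 xi k0 k1 k2 : measurable_fun setT (g3 xi k0 k1 k2).
Proof.
rewrite /g3.
have mc : measurable_fun setT (fun v => cos (dot3 xi v)).
  exact: (measurableT_comp (continuous_measurable_fun (@continuous_cos R)) (meas_dot3 xi)).
have ms : measurable_fun setT (fun v => sin (dot3 xi v)).
  exact: (measurableT_comp (continuous_measurable_fun (@continuous_sin R)) (meas_dot3 xi)).
apply: measurable_funD; first apply: measurable_funD.
- exact: measurable_cst.
- by apply: measurable_funM => //; exact: measurable_cst.
- by apply: measurable_funM => //; exact: measurable_cst.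
Qed.

Lemma int_bounded (f : R * R * R -> R) (K : R) : measurable_fun setT f ->
  (forall x, `|f x| <= K) -> mu.-integrable setT (EFin \o f).
Proof.
move=> mf fK; apply/integrableP; split; first exact/measurable_EFinP.
have K0 : 0 <= K by apply: le_trans (fK point).
apply: (@le_lt_trans _ _ (K%:E * mu setT)%E).
  apply: integral_le_bound => //.
  - exact/measurable_EFinP.
  - by apply: aeW => x _ /=; rewrite lee_fin.
by rewrite probability_setT mule1 ltry.
Qed.


Lemma int_cos xi : mu.-integrable setT (EFin \o (fun v => cos (dot3 xi v))).
Proof.
apply: (@int_bounded _ 1).
  exact: (measurableT_comp (continuous_measurable_fun (@continuous_cos R)) (meas_dot3 xi)).
by move=> x; exact: cos_max.
Qed.

Lemma int_sin xi : mu.-integrable setT (EFin \o (fun v => sin (dot3 xi v))).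
Proof.
apply: (@int_bounded _ 1).
  exact: (measurableT_comp (continuous_measurable_fun (@continuous_sin R)) (meas_dot3 xi)).
by move=> x; exact: sin_max.
Qed.

Lemma int_g3 xi k0 k1 k2 : mu.-integrable setT (EFin \o g3 xi k0 k1 k2).
Proof.
apply: (@int_bounded _ (`|k0| + `|k1| + `|k2|)); first exact: meas_g3.
move=> x; rewrite /g3.
apply: (le_trans (ler_normD _ _)); apply: lerD; last first.
  by rewrite normrM ler_piMr // sin_max.
apply: (le_trans (ler_normD _ _)); apply: lerD => //.
by rewrite normrM ler_piMr // cos_max.
Qed.

Lemma Rint_g3 xi k0 k1 k2 :
  Rintegral mu setT (g3 xi k0 k1 k2) = k0 + k1 * fourier_re mu xi + k2 * fourier_im mu xi.
Proof.
rewrite /g3 /fourier_re /fourier_im.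
have ic := int_cos xi; have isn := int_sin xi.
have ik0 : mu.-integrable setT (EFin \o (fun _ : R * R * R => k0)).
  by apply: (@int_bounded _ `|k0|) => //; exact: measurable_cst.
have ik1 : mu.-integrable setT (EFin \o (fun v => k1 * cos (dot3 xi v))).
  apply: (@int_bounded _ `|k1|).
    apply: measurable_funM; first exact: measurable_cst.
    exact: (measurableT_comp (continuous_measurable_fun (@continuous_cos R)) (meas_dot3 xi)).
  by move=> x; rewrite normrM ler_piMr // cos_max.
have ik2 : mu.-integrable setT (EFin \o (fun v => k2 * sin (dot3 xi v))).
  apply: (@int_bounded _ `|k2|).
    apply: measurable_funM; first exact: measurable_cst.
    exact: (measurableT_comp (continuous_measurable_fun (@continuous_sin R)) (meas_dot3 xi)).
  by move=> x; rewrite normrM ler_piMr // sin_max.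
have ik01 : mu.-integrable setT (EFin \o (fun v => k0 + k1 * cos (dot3 xi v))).
  exact: (integrableD _ ik0 ik1).
rewrite RintegralD //= RintegralD //= RintegralZl // RintegralZl //.
rewrite Rintegral_cst //.
match goal with |- context [fine ?x] => have -> : x = 1%E by apply: probability_setT end.
by rewrite /= mulr1.
Qed.


Lemma cs_sqrt (x y A B : R) : x ^+ 2 + y ^+ 2 = 1 -> x * A + y * B <= Num.sqrt (A ^+ 2 + B ^+ 2).
Proof.
move=> h.
have h2 : (x * A + y * B) ^+ 2 <= A ^+ 2 + B ^+ 2.
  have := sqr_ge0 (x * B - y * A); nra.
apply: (le_trans (ler_norm _)); rewrite -sqrtr_sqr; exact: ler_wsqrtr.
Qed.

Lemma re_im_le1 xi (c d : R) : c ^+ 2 + d ^+ 2 = 1 ->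
  c * fourier_re mu xi + d * fourier_im mu xi <= 1.
Proof.
move=> h.
have -> : c * fourier_re mu xi + d * fourier_im mu xi = Rintegral mu setT (g3 xi 0 c d)
  by rewrite Rint_g3 add0r.
have -> : (1 : R) = Rintegral mu setT (g3 xi 1 0 0) by rewrite Rint_g3 !mul0r !addr0.
apply: le_Rintegral => //; [exact: int_g3 | exact: int_g3 |].
move=> v _; rewrite /g3 !mul0r !addr0 add0r.
have := cos2Dsin2 (dot3 xi v).
set C := cos _; set S := sin _ => e.
have := sqr_ge0 (c - C); have := sqr_ge0 (d - S); nra.
Qed.

Lemma fabs_ge0 xi : 0 <= fourier_abs mu xi.
Proof. exact: sqrtr_ge0. Qed.

Lemma fabs_dir xi : 0 < fourier_abs mu xi ->
  let c := fourier_re mu xi / fourier_abs mu xi in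
  let d := fourier_im mu xi / fourier_abs mu xi in
  c ^+ 2 + d ^+ 2 = 1 /\ c * fourier_re mu xi + d * fourier_im mu xi = fourier_abs mu xi.
Proof.
move=> r0 c d.
have hr : fourier_abs mu xi ^+ 2 = fourier_re mu xi ^+ 2 + fourier_im mu xi ^+ 2.
  by rewrite /fourier_abs sqr_sqrtr // addr_ge0 // sqr_ge0.
have rn : fourier_abs mu xi != 0 by rewrite gt_eqF.
rewrite /c /d; split.
  by rewrite !expr_div_n -mulrDl -hr divff // expf_neq0.
rewrite (_ : _ / _ * _ + _ / _ * _ = (fourier_re mu xi ^+ 2 + fourier_im mu xi ^+ 2) / fourier_abs mu xi); last by ring.
by rewrite -hr expr2 mulfK.
Qed.

Lemma fabs_le1 xi : fourier_abs mu xi <= 1.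
Proof.
have [r0|r0] := leP (fourier_abs mu xi) 0; first exact: (le_trans r0).
have [h1 h2] := fabs_dir xi r0; rewrite -h2; exact: re_im_le1 h1.
Qed.


Definition dbl (xi : R * R * R) : R * R * R := ((vx xi *+ 2, vy xi *+ 2), vz xi *+ 2).

Lemma dot3_dbl xi v : dot3 (dbl xi) v = dot3 xi v *+ 2.
Proof. rewrite /dot3 /dbl /vx /vy /vz /=; rewrite !mulr2n; ring. Qed.

Lemma sqnorm3_dbl xi : sqnorm3 (dbl xi) = 4 * sqnorm3 xi.
Proof. rewrite /sqnorm3 /dot3 /dbl /vx /vy /vz /=; rewrite !mulr2n; ring. Qed.

Lemma doubling xi : 1 - fourier_abs mu (dbl xi) <= 4 * (1 - fourier_abs mu xi).
Proof.
have [r0|r0] := leP (fourier_abs mu xi) 0.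
  have e : fourier_abs mu xi = 0 by apply/eqP; rewrite eq_le r0 fabs_ge0.
  rewrite e subr0 mulr1; have := fabs_ge0 (dbl xi); lra.
have [h1 h2] := fabs_dir xi r0.
set c := fourier_re mu xi / fourier_abs mu xi in h1 h2.
set d := fourier_im mu xi / fourier_abs mu xi in h1 h2.
set x := c ^+ 2 - d ^+ 2; set y := 2 * c * d.
have hxy : x ^+ 2 + y ^+ 2 = 1.
  have -> : x ^+ 2 + y ^+ 2 = (c ^+ 2 + d ^+ 2) ^+ 2 by rewrite /x /y; ring.
  by rewrite h1 expr1n.
have hcs := @cs_sqrt x y (fourier_re mu (dbl xi)) (fourier_im mu (dbl xi)) hxy.
have key : Rintegral mu setT (g3 (dbl xi) 1 (- x) (- y)) <=
           Rintegral mu setT (g3 xi 4 (- (4 * c)) (- (4 * d))).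
  apply: le_Rintegral => //; [exact: int_g3 | exact: int_g3 |].
  move=> v _; rewrite /g3 dot3_dbl cos_mulr2n sin_mulr2n.
  have := cos2Dsin2 (dot3 xi v).
  set C := cos _; set S := sin _ => e.
  rewrite /x /y.
  have := sqr_ge0 (1 - (c * C + d * S)).
  nra.
rewrite !Rint_g3 in key.
rewrite /fourier_abs in hcs |- *.
move: key hcs h2; rewrite /fourier_abs.
lra.
Qed.


Lemma norm3_dbl (xi : R * R * R) : norm3 (dbl xi) = 2 * norm3 xi.
Proof.
rewrite /norm3 sqnorm3_dbl sqrtrM //.
by rewrite (_ : (4 : R) = 2 ^+ 2) ?sqrtr_sqr ?ger0_norm //; rewrite expr2; lra.
Qed.

Lemma norm3_ge0 (xi : R * R * R) : 0 <= norm3 xi.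
Proof. exact: sqrtr_ge0. Qed.

Lemma sqnorm3_ge0 (xi : R * R * R) : 0 <= sqnorm3 xi.
Proof. rewrite /sqnorm3 /dot3; rewrite -!expr2; have := sqr_ge0 (vx xi); have := sqr_ge0 (vy xi); have := sqr_ge0 (vz xi); lra. Qed.

Lemma norm3_sqr (xi : R * R * R) : norm3 xi ^+ 2 = sqnorm3 xi.
Proof. by rewrite /norm3 sqr_sqrtr // sqnorm3_ge0. Qed.

Lemma quad (M : R) : 0 < M -> (forall xi, M < norm3 xi -> fourier_abs mu xi <= 2^-1) ->
  forall n xi, M / 2 ^+ n.+1 < norm3 xi <= M ->
  norm3 xi ^+ 2 / (8 * M ^+ 2) <= 1 - fourier_abs mu xi.
Proof.
move=> M0 hM; elim => [|n IH] xi /andP[lo hi].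
  have h2 : M < norm3 (dbl xi) by rewrite norm3_dbl; move: lo; rewrite expr1; lra.
  have := hM _ h2; have := doubling xi => d1 d2.
  have : 1 - fourier_abs mu xi >= 8^-1 by lra.
  apply: le_trans; rewrite ler_pdivrMr ?mulr_gt0 ?exprn_gt0 //.
  have := norm3_ge0 xi => t0.
  have : norm3 xi ^+ 2 <= M ^+ 2 by rewrite lerXn2r // ?nnegrE //; lra.
  lra.
have t0 := norm3_ge0 xi.
have [lo2|lo2] := ltP (M / 2 ^+ n.+1) (norm3 xi); first by apply: IH; rewrite lo2 hi.
have p0 : 0 < (2:R) ^+ n.+1 by rewrite exprn_gt0.
have p2 : 2 <= (2:R) ^+ n.+1.
  by rewrite exprS ler_peMr // exprn_ege1 // ler1n.
have e1 : M / 2 ^+ n.+2 = (M / 2 ^+ n.+1) / 2 by rewrite exprS invfM; ring.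
rewrite e1 in lo.
have hd : M / 2 ^+ n.+1 < norm3 (dbl xi) <= M.
  rewrite norm3_dbl; apply/andP; split; first lra.
  have : M / 2 ^+ n.+1 <= M / 2.
    by rewrite ler_pM2l // lef_pV2 ?posrE //.
  lra.
have := IH _ hd; rewrite norm3_dbl; have := doubling xi.
have q0 : 0 < 8 * M ^+ 2 by rewrite mulr_gt0 // exprn_gt0.
rewrite exprMn; set a := norm3 xi ^+ 2 / (8 * M ^+ 2).
rewrite (_ : 2 ^+ 2 * norm3 xi ^+ 2 / (8 * M ^+ 2) = 4 * a); last by rewrite /a expr2; ring.
lra.
Qed.


Lemma nat_le_pow2 (n : nat) : (n%:R : R) <= 2 ^+ n.
Proof.
elim: n => [|n IH]; first by rewrite expr0 ler01.
rewrite -natr1 exprS.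
have : (1 : R) <= 2 ^+ n by rewrite exprn_ege1 // ler1n.
lra.
Qed.

Lemma aux_b (A s : R) : 0 < A -> 0 <= s -> 1 - s / (8 * A) <= 9 * A / (9 * A + s).
Proof.
move=> A0 s0.
have p8 : 0 < 8 * A by lra.
set u := s / (8 * A).
have su : s = 8 * A * u by rewrite /u mulrC divfK // gt_eqF.
have u0 : 0 <= u by rewrite /u divr_ge0 // ltW.
rewrite ler_pdivlMr; last lra.
rewrite su; nra.
Qed.

End S.

Theorem proposition2p1 (R : realType) (mu : probability (R * R * R)%type R)
  (p : R) (sigma : 'I_3 -> R) :
  (\int[mu]_v ((sqnorm3 v) ^+ 2)%:E < +oo)%E ->
  0 < p ->
  (forall eps : R, 0 < eps -> exists M : R, forall xi : R * R * R,
      M < norm3 xi -> (norm3 xi) `^ p * fourier_abs mu xi <= eps) ->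
  (forall i : 'I_3, Rintegral mu setT (comp3 i) = 0) ->
  Rintegral mu setT sqnorm3 = 3 ->
  (forall i : 'I_3, Rintegral mu setT (fun v => comp3 i v ^+ 2) = sigma i ^+ 2) ->
  (forall i j : 'I_3, i != j ->
      Rintegral mu setT (fun v => comp3 i v * comp3 j v) = 0) ->
  exists lambda : R, 0 < lambda /\
    forall xi : R * R * R,
      fourier_abs mu xi <=
        (lambda ^+ 2 / (lambda ^+ 2 + sqnorm3 xi))
          `^ ((2 * (Num.ceil (2 / p))%:~R)^-1).
Proof.
move=> _ p0 hdec _ _ _ _.
have [M1 hM1] := hdec (2^-1) (ltac:(rewrite invr_gt0; lra)).
set M := Num.max M1 1.
have M1le : M1 <= M by rewrite /M le_max lexx.
have M1' : 1 <= M by rewrite /M le_max lexx orbT.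
have M0 : 0 < M by lra.
have hdecM : forall xi, M < norm3 xi -> norm3 xi `^ p * fourier_abs mu xi <= 2^-1.
  by move=> xi h; apply: hM1; lra.
have hpow1 : forall t, 1 <= t -> 1 <= t `^ p.
  by move=> t t1; rewrite -(powRr0 t); apply: ler_powR => //; lra.
have hhalf : forall xi, M < norm3 xi -> fourier_abs mu xi <= 2^-1.
  move=> xi h; have := hdecM xi h; have := hpow1 (norm3 xi) ltac:(lra).
  have := @fabs_ge0 _ mu xi; nra.
exists (3 * M); split; first lra.
move=> xi.
set k : R := (Num.ceil (2 / p))%:~R.
have k2 : 2 / p <= k by exact: ceil_ge.
have kpos : (0 < Num.ceil (2 / p))%R by rewrite ceil_gt0 divr_gt0.
have k1 : 1 <= k by rewrite /k ler1z.
have kp : 2 <= k * p by rewrite -ler_pdivrMr.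
set q := (2 * k)^-1.
have q0 : 0 < q by rewrite invr_gt0; lra.
have q1 : q <= 1 by rewrite invf_le1; lra.
have q2p : 2 * q <= p.
  rewrite /q invfM mulrA mulfV ?mul1r; last by rewrite pnatr_eq0.
  rewrite -div1r ler_pdivrMr; lra.
have t0 := @norm3_ge0 R xi.
have es := @norm3_sqr R xi.
set t := norm3 xi in t0 es hdecM hhalf *.
set s := sqnorm3 xi in es *.
have s0 : 0 <= s by rewrite -es sqr_ge0.
set b := (3 * M) ^+ 2 / ((3 * M) ^+ 2 + s).
have A0 : 0 < (3 * M) ^+ 2 by rewrite exprn_gt0 //; lra.
have b0 : 0 < b by rewrite divr_gt0 //; lra.
have b1 : b <= 1 by rewrite ler_pdivrMr; lra.
have hb : b <= b `^ q by apply: ger1_powR => //; rewrite b0 b1.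
have [tM|tM] := leP t M.
  have [tz|tz] := leP t 0.
    have t00 : t = 0 by lra.
    have -> : b = 1 by rewrite /b -es t00 expr0n /= addr0 divff // gt_eqF.
    by rewrite powR1; exact: (@fabs_le1 _ mu xi).
  apply: le_trans hb.
  have [n hn] : exists n : nat, M / 2 ^+ n.+1 < t.
    have x0 : 0 <= M / t by rewrite divr_ge0 //; lra.
    exists (Num.bound (M / t)).
    have := archi_boundP x0; have := @nat_le_pow2 R (Num.bound (M / t)).
    set N := Num.bound (M / t) => h1 h2.
    have p0' : 0 < (2:R) ^+ N.+1 by rewrite exprn_gt0.
    rewrite ltr_pdivrMr //.
    have hN : (1 : R) <= 2 ^+ N by rewrite exprn_ege1 // ler1n.
    have hlt : M / t < 2 ^+ N.+1 by rewrite exprS; lra.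
    by move: hlt; rewrite ltr_pdivrMr // mulrC.
  have := @quad _ mu M M0 hhalf n xi; rewrite hn tM => /(_ isT).
  rewrite es => hq.
  have := @aux_b R (M ^+ 2) s ltac:(rewrite exprn_gt0 //) s0.
  rewrite /b exprMn (_ : (3 : R) ^+ 2 = 9); last by rewrite expr2; lra.
  lra.
have [t3|t3] := leP t (3 * M).
  apply: le_trans hb; apply: le_trans (hhalf xi tM) _.
  have : s <= (3 * M) ^+ 2 by rewrite -es lerXn2r // nnegrE; lra.
  move=> hs; rewrite /b ler_pdivlMr; lra.
have t1 : 1 <= t by lra.
have hs9 : (3 * M) ^+ 2 < s by rewrite -es !expr2; nra.
have bs : s^-1 <= b.
  have sp : 0 < s by lra.
  rewrite /b ler_pdivlMr; last lra.
  have h9 : 9 <= (3 * M) ^+ 2 by rewrite expr2; nra.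
  have hA : (3 * M) ^+ 2 / s <= 1 by rewrite ler_pdivrMr //; lra.
  rewrite mulrDr mulVf ?gt_eqF // mulrC; lra.
have e1 : (s^-1) `^ q = (s `^ q)^-1.
  by rewrite -powR_inv1 // -powRrM mulN1r powRN.
have e2 : s `^ q = t `^ (2 * q).
  by rewrite -es -(@powR_mulrn _ t 2) // powRrM.
have hsq : t `^ (2 * q) <= t `^ p by apply: ler_powR.
have tp0 : 0 < t `^ (2 * q) by rewrite powR_gt0 //; lra.
have hF : fourier_abs mu xi <= (t `^ p)^-1.
  have h := hdecM xi tM; rewrite -/t in h; have F0 := @fabs_ge0 _ mu xi.
  have tp : 0 < t `^ p by have := hpow1 t t1; lra.
  rewrite -(ler_pM2l tp) mulfV ?gt_eqF //; lra.
apply: (le_trans hF); apply: le_trans (_ : (s `^ q)^-1 <= _).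
  by rewrite e2 lef_pV2 ?posrE // (lt_le_trans tp0 hsq).
rewrite -e1; apply: ge0_ler_powR; rewrite ?nnegrE //.
- lra.
- by rewrite invr_ge0.
- lra.
Qed.
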